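(* For $\lambda,\mu\in\mathbb{C}$ and pure-parity $f\in\mathcal{F}_\lambda$, $g\in\mathcal{F}_\mu$, define $$(f,g)=\mu\,\overline{D}(f)\,g-(-1)^{\sigma(f)}\,\lambda\,f\,\overline{D}(g)\in\mathcal{F}_{\lambda+\mu+\frac12},\qquad [f,g]=\mu\,f'\,g-\lambda\,f\,g'-(-1)^{\sigma(f)}\,\tfrac12\,\overline{D}(f)\,\overline{D}(g)\in\mathcal{F}_{\lambda+\mu+1}.$$ Then for every pure-parity $f\in\mathcal{F}_{-1}$ and all $\mu,\nu\in\mathbb{C}$ and pure-parity $g\in\mathcal{F}_\mu$, $h\in\mathcal{F}_\nu$, $$[f,(g,h)]=(-1)^{\sigma(f)}\,([f,g],h)+(-1)^{\sigma(f)(\sigma(g)+1)}\,(g,[f,h]).$$ That is, the odd operation $(\,,\,)$ on $\mathcal{F}=\bigoplus_\lambda\mathcal{F}_\lambda$ is invariant under the Lie superalgebra $\mathcal{K}(1)=(\mathcal{F}_{-1},[\,,\,])$.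
   Context: The supercircle $S^{1|1}$ has superalgebra of functions $C^\infty_{\mathbb{C}}(S^1)[\xi]$: elements $f=f_0(x)+\xi f_1(x)$ with $f_0,f_1$ smooth complex functions on $S^1$, $x$ the (affine) coordinate, $\xi$ odd with $\xi^2=0$, $x\xi=\xi x$. Parity: $\sigma(f_0)=0$, $\sigma(\xi f_1)=1$. Write $f'=\partial_x f=f_0'+\xi f_1'$, $\partial_\xi f=f_1$, and $\overline{D}=\partial_\xi-\xi\,\partial_x$. For $\lambda\in\mathbb{C}$, $\mathcal{F}_\lambda$ denotes a copy of $C^\infty_{\mathbb{C}}(S^{1|1})$ labelled by the weight $\lambda$; in each bracket the weights used in the formula are those of the spaces the arguments belong to (e.g. in $[f,g]$ with $f\in\mathcal{F}_{-1}$, $g\in\mathcal{F}_\mu$ one uses $\lambda=-1$; in $[f,(g,h)]$ the second argument has weight $\mu+\nu+\frac12$). *)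

(* Defs.v *)
From Stdlib Require Import Reals.
From Coquelicot Require Import Coquelicot.
Set Implicit Arguments.

Open Scope R_scope.

(* Smooth complex-valued functions on S^1 = R/Z, seen as 1-periodic functions
   R -> C whose real and imaginary parts are infinitely differentiable. *)
Definition smooth_S1 (u : R -> C) : Prop :=
  (forall x, u (x + 1) = u x) /\
  (forall n x, ex_derive_n (fun t => Re (u t)) n x) /\
  (forall n x, ex_derive_n (fun t => Im (u t)) n x).

Definition cderiv (u : R -> C) : R -> C :=
  fun x => (Derive (fun t => Re (u t)) x, Derive (fun t => Im (u t)) x).

(* An element f = f0(x) + xi f1(x) of C^oo_C(S^{1|1}) *)
Record sfun := SF { sf0 : R -> C ; sf1 : R -> C }.

Definition is_sfun (f : sfun) : Prop := smooth_S1 (sf0 f) /\ smooth_S1 (sf1 f).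

(* pure parity: sigma(f) = false (even) means f = f0, sigma(f) = true (odd)
   means f = xi f1 *)
Definition pure (p : bool) (f : sfun) : Prop :=
  if p then forall x, sf0 f x = 0%C else forall x, sf1 f x = 0%C.

Open Scope C_scope.

Definition sadd (f g : sfun) : sfun :=
  SF (fun x => sf0 f x + sf0 g x) (fun x => sf1 f x + sf1 g x).
Definition ssub (f g : sfun) : sfun :=
  SF (fun x => sf0 f x - sf0 g x) (fun x => sf1 f x - sf1 g x).
Definition sscal (a : C) (f : sfun) : sfun :=
  SF (fun x => a * sf0 f x) (fun x => a * sf1 f x).
(* (f0 + xi f1)(g0 + xi g1) = f0 g0 + xi (f1 g0 + f0 g1), since xi^2 = 0 *)
Definition smul (f g : sfun) : sfun :=
  SF (fun x => sf0 f x * sf0 g x)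
     (fun x => sf1 f x * sf0 g x + sf0 f x * sf1 g x).
Definition sdx (f : sfun) : sfun := SF (cderiv (sf0 f)) (cderiv (sf1 f)).
Definition sdxi (f : sfun) : sfun := SF (sf1 f) (fun _ => 0).
(* multiplication by xi : xi (f0 + xi f1) = xi f0 *)
Definition sxi (f : sfun) : sfun := SF (fun _ => 0) (sf0 f).
Definition Dbar (f : sfun) : sfun := ssub (sdxi f) (sxi (sdx f)).

Definition csign (n : nat) : C := RtoC ((-1) ^ n)%R.

Definition obr (pf : bool) (lam mu : C) (f g : sfun) : sfun :=
  ssub (sscal mu (smul (Dbar f) g))
       (sscal (csign (Nat.b2n pf) * lam) (smul f (Dbar g))).

Definition lbr (pf : bool) (lam mu : C) (f g : sfun) : sfun :=
  ssub (ssub (sscal mu (smul (sdx f) g)) (sscal lam (smul f (sdx g))))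
       (sscal (csign (Nat.b2n pf) * RtoC (/ 2)%R) (smul (Dbar f) (Dbar g))).

(* Main.v *)
Require Import Defs.
From Stdlib Require Import Reals Lra FunctionalExtensionality.
From Coquelicot Require Import Coquelicot.
Open Scope C_scope.

Definition HasD (u du : R -> C) : Prop :=
  forall x, is_derive (fun t => Re (u t)) x (Re (du x)) /\
            is_derive (fun t => Im (u t)) x (Im (du x)).

Lemma is_derive_eq (f : R -> R) x l l' : is_derive f x l -> l = l' -> is_derive f x l'.
Proof. intros H ->; exact H. Qed.

Lemma cderiv_eq u du x : HasD u du -> cderiv u x = du x.
Proof.
  intros H. destruct (H x) as [H1 H2]. unfold cderiv.
  transitivity (Re (du x), Im (du x));
   [f_equal; apply is_derive_unique; assumption | destruct (du x); reflexivity].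
Qed.

Lemma HasD_const c : HasD (fun _ => c) (fun _ => 0).
Proof. intro x; split; simpl; (eapply is_derive_eq; [apply is_derive_const|reflexivity]). Qed.

Lemma dplus (f g : R -> R) x df dg : is_derive f x df -> is_derive g x dg ->
  is_derive (fun t => f t + g t)%R x (df + dg)%R.
Proof. intros Hf Hg. exact (is_derive_plus f g x df dg Hf Hg). Qed.
Lemma dminus (f g : R -> R) x df dg : is_derive f x df -> is_derive g x dg ->
  is_derive (fun t => f t - g t)%R x (df - dg)%R.
Proof. intros Hf Hg. exact (is_derive_minus f g x df dg Hf Hg). Qed.
Lemma dmult (f g : R -> R) x df dg : is_derive f x df -> is_derive g x dg ->
  is_derive (fun t => f t * g t)%R x (df * g x + f x * dg)%R.
Proof. intros Hf Hg. exact (is_derive_mult f g x df dg Hf Hg Rmult_comm). Qed.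

Lemma HasD_add u du v dv : HasD u du -> HasD v dv ->
  HasD (fun t => u t + v t) (fun t => du t + dv t).
Proof.
  intros Hu Hv x; destruct (Hu x) as [a b], (Hv x) as [c d]; split.
  - apply (is_derive_ext (fun t => Re (u t) + Re (v t))%R); [intro; reflexivity|].
    exact (dplus _ _ x _ _ a c).
  - apply (is_derive_ext (fun t => Im (u t) + Im (v t))%R); [intro; reflexivity|].
    exact (dplus _ _ x _ _ b d).
Qed.

Lemma HasD_sub u du v dv : HasD u du -> HasD v dv ->
  HasD (fun t => u t - v t) (fun t => du t - dv t).
Proof.
  intros Hu Hv x; destruct (Hu x) as [a b], (Hv x) as [c d]; split.
  - apply (is_derive_ext (fun t => Re (u t) - Re (v t))%R); [intro; reflexivity|].
    exact (dminus _ _ x _ _ a c).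
  - apply (is_derive_ext (fun t => Im (u t) - Im (v t))%R); [intro; reflexivity|].
    exact (dminus _ _ x _ _ b d).
Qed.

Lemma HasD_mul u du v dv : HasD u du -> HasD v dv ->
  HasD (fun t => u t * v t) (fun t => du t * v t + u t * dv t).
Proof.
  intros Hu Hv x; destruct (Hu x) as [a b], (Hv x) as [c d]; split.
  - apply (is_derive_ext (fun t => Re (u t) * Re (v t) - Im (u t) * Im (v t))%R); [intro; reflexivity|].
    eapply is_derive_eq; [exact (dminus _ _ x _ _ (dmult _ _ x _ _ a c) (dmult _ _ x _ _ b d))|].
    unfold Re, Im; destruct (du x), (dv x), (u x), (v x); simpl; ring.
  - apply (is_derive_ext (fun t => Re (u t) * Im (v t) + Im (u t) * Re (v t))%R); [intro; reflexivity|].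
    eapply is_derive_eq; [exact (dplus _ _ x _ _ (dmult _ _ x _ _ a d) (dmult _ _ x _ _ b c))|].
    unfold Re, Im; destruct (du x), (dv x), (u x), (v x); simpl; ring.
Qed.

Lemma smooth_HasD u : smooth_S1 u -> HasD u (cderiv u) /\ HasD (cderiv u) (cderiv (cderiv u)).
Proof.
  intros [_ [H1 H2]]; split; intro x; split; simpl; apply Derive_correct.
  - exact (H1 1%nat x).
  - exact (H2 1%nat x).
  - exact (H1 2%nat x).
  - exact (H2 2%nat x).
Qed.

Lemma cderiv0 : cderiv (fun _ : R => 0%C) = (fun _ => 0%C).
Proof. apply functional_extensionality; intro x; unfold cderiv; simpl.
  rewrite !Derive_const; reflexivity. Qed.

Ltac hstep := match goal with
 | |- HasD (fun _ => ?c) _ => exact (HasD_const c)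
 | |- HasD (fun t => @?a t - @?b t) _ => refine (HasD_sub a _ b _ _ _)
 | |- HasD (fun t => @?a t + @?b t) _ => refine (HasD_add a _ b _ _ _)
 | |- HasD (fun t => @?a t * @?b t) _ => refine (HasD_mul a _ b _ _ _)
 | |- HasD _ _ => eassumption
 end.
Ltac solve_HasD := repeat hstep.

Ltac cd_all :=
  repeat match goal with
  |- context [cderiv ?u ?x] =>
     match u with (fun _ => _) => erewrite (@cderiv_eq u _ x) by solve_HasD end
  end.

Lemma half : RtoC (/2) = / (1+1).
Proof. replace (1+1) with (RtoC 2) by (rewrite <- RtoC_plus; f_equal; ring). rewrite <- RtoC_inv; auto. Qed.
Lemma m1 : RtoC (-1) = - 1. Proof. replace (-1)%R with (Ropp 1) by lra. now rewrite RtoC_opp. Qed.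

Lemma cs0 : csign 0 = 1. Proof. unfold csign; simpl; reflexivity. Qed.
Lemma cs1 : csign 1 = - 1. Proof. unfold csign; simpl. rewrite Rmult_1_r. apply m1. Qed.
Lemma cs2 : csign 2 = 1. Proof. unfold csign; simpl. f_equal. ring. Qed.

Ltac zsub := repeat match goal with H : forall x : R, ?f x = _ |- _ =>
  let E := fresh in assert (E : f = fun _ => 0) by (apply functional_extensionality; exact H);
  clear H; subst f end.

Ltac finish := cbn [Nat.b2n xorb Nat.mul Nat.add]; rewrite ?cs0, ?cs1, ?cs2, ?m1, ?half;
  repeat rewrite cderiv0; cbv beta; first [field | (match goal with |- ?G => idtac G end; fail 10)].

Theorem proposition2p2 (mu nu : C) (pf pg ph : bool) (f g h : sfun) :
  is_sfun f -> is_sfun g -> is_sfun h ->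
  pure pf f -> pure pg g -> pure ph h ->
  lbr pf (RtoC (-1)%R) (mu + nu + RtoC (/ 2)%R) f (obr pg mu nu g h)
  = sadd
      (sscal (csign (Nat.b2n pf)) (obr (xorb pf pg) mu nu (lbr pf (RtoC (-1)%R) mu f g) h))
      (sscal (csign (Nat.b2n pf * (Nat.b2n pg + 1))) (obr pg mu nu g (lbr pf (RtoC (-1)%R) nu f h))).
Proof.
  destruct f as [f0 f1], g as [g0 g1], h as [h0 h1].
  intros [Sf0 Sf1] [Sg0 Sg1] [Sh0 Sh1] Pf Pg Ph.
  apply smooth_HasD in Sf0, Sf1, Sg0, Sg1, Sh0, Sh1.
  destruct Sf0, Sf1, Sg0, Sg1, Sh0, Sh1.
  cbn [sf0 sf1] in *.
  cbv [lbr obr sadd ssub sscal smul sdx Dbar sdxi sxi sf0 sf1].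
  f_equal; apply functional_extensionality; intro x.
  all: cd_all; destruct pf, pg, ph; unfold pure in Pf, Pg, Ph; simpl in Pf, Pg, Ph; zsub; finish.
Qed.
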